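(* Let $\mathcal{X},\mathcal{Y}$ be stationary finite Markov chains and $C:{\bm X}\times{\bm Y}\to\mathbb{R}_+$ a cost function. Then $$d_{\mathrm{OTC}}(\mathcal{X},\mathcal{Y};C)=\lim_{\delta\to0}d^{\delta,(\infty)}_{\mathrm{WL}}(\mathcal{X},\mathcal{Y};C),\quad\text{and hence}\quad d_{\mathrm{OTC}}(\mathcal{X},\mathcal{Y};C)=\lim_{\delta\to0}\lim_{k\to\infty}d^{\delta,(k)}_{\mathrm{WL}}(\mathcal{X},\mathcal{Y};C).$$
   Context: A finite Markov chain $\mathcal{X}=({\bm X},m^{\bm X}_\bullet,\nu^{\bm X})$ consists of a finite set ${\bm X}$, a transition kernel $m^{\bm X}_\bullet:{\bm X}\to\mathcal{P}({\bm X})$ and an initial distribution $\nu^{\bm X}$; it is stationary if $\nu^{\bm X}$ is stationary for $m^{\bm X}_\bullet$. $\mathcal{C}(\alpha,\beta)$ denotes the set of couplings. A Markovian coupling between $\mathcal{X}$ and $\mathcal{Y}$ is a (possibly time-inhomogeneous) Markov chain $(X_t,Y_t)_{t\in\mathbb{N}}$ on ${\bm X}\times{\bm Y}$ with $\mathrm{law}(X_0,Y_0)\in\mathcal{C}(\nu^{\bm X},\nu^{\bm Y})$ and, for all $t,x,y$, the conditional law of $(X_{t+1},Y_{t+1})$ given $(X_t,Y_t)=(x,y)$ in $\mathcal{C}(m^{\bm X}_x,m^{\bm Y}_y)$; it is time homogeneous if these laws do not depend on $t$. $\Pi(\mathcal{X},\mathcal{Y})$ is the set of Markovian couplings. $d_{\mathrm{OTC}}(\mathcal{X},\mathcal{Y};C)=\inf\mathbb{E}\,C(X_0,Y_0)$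 over time homogeneous Markovian couplings whose initial distribution is stationary for the coupled chain. For $\delta\in(0,1]$: $d^{\delta,(k)}_{\mathrm{WL}}(\mathcal{X},\mathcal{Y};C)=\inf_{\Pi(\mathcal{X},\mathcal{Y})}\mathbb{E}\big[\sum_{t=0}^{k-1}\delta(1-\delta)^tC(X_t,Y_t)+(1-\delta)^kC(X_k,Y_k)\big]$ for $k\in\mathbb{N}$ and $d^{\delta,(\infty)}_{\mathrm{WL}}(\mathcal{X},\mathcal{Y};C)=\inf_{\Pi(\mathcal{X},\mathcal{Y})}\mathbb{E}\big[\sum_{t=0}^{\infty}\delta(1-\delta)^tC(X_t,Y_t)\big]$. *)

(* Defs.v *)
From HB Require Import structures.
From mathcomp Require Import all_boot all_order all_algebra.
From mathcomp Require Import all_classical all_reals all_analysis.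
Set Implicit Arguments. Unset Strict Implicit. Unset Printing Implicit Defensive.
Import Order.TTheory GRing.Theory Num.Theory.
Local Open Scope classical_set_scope.
Local Open Scope ring_scope.

Definition is_prob {R : realType} {T : finType} (p : T -> R) : Prop :=
  (forall x, 0 <= p x) /\ \sum_(x : T) p x = 1.

Definition is_kernel {R : realType} {T : finType} (m : T -> T -> R) : Prop :=
  forall x, is_prob (m x).

Definition is_stationary {R : realType} {T : finType} (m : T -> T -> R) (nu : T -> R) : Prop :=
  forall x', \sum_(x : T) nu x * m x x' = nu x'.

Definition stationary_chain {R : realType} {T : finType} (m : T -> T -> R) (nu : T -> R) : Prop :=
  is_kernel m /\ is_prob nu /\ is_stationary m nu.

Definition is_coupling {R : realType} {X Y : finType} (a : X -> R) (b : Y -> R)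
  (g : (X * Y)%type -> R) : Prop :=
  (forall z, 0 <= g z) /\
  (forall x, \sum_(y : Y) g (x, y) = a x) /\
  (forall y, \sum_(x : X) g (x, y) = b y).

(* A (possibly time-inhomogeneous) Markovian coupling, given by its initial law g0
   and its transition kernels K t (law of (X_{t+1},Y_{t+1}) given (X_t,Y_t)=z is K t z). *)
Definition markov_coupling {R : realType} {X Y : finType}
  (mX : X -> X -> R) (nuX : X -> R) (mY : Y -> Y -> R) (nuY : Y -> R)
  (g0 : (X * Y)%type -> R) (K : nat -> (X * Y)%type -> (X * Y)%type -> R) : Prop :=
  is_coupling nuX nuY g0 /\
  (forall t x y, is_coupling (mX x) (mY y) (K t (x, y))).

Fixpoint coupling_law {R : realType} {X Y : finType}
  (g0 : (X * Y)%type -> R) (K : nat -> (X * Y)%type -> (X * Y)%type -> R) (t : nat)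
  : (X * Y)%type -> R :=
  match t with
  | 0%N => g0
  | t'.+1 => fun z' => \sum_(z : (X * Y)%type) coupling_law g0 K t' z * K t' z z'
  end.

Definition exp_cost {R : realType} {X Y : finType}
  (g0 : (X * Y)%type -> R) (K : nat -> (X * Y)%type -> (X * Y)%type -> R)
  (C : X -> Y -> R) (t : nat) : R :=
  \sum_(z : (X * Y)%type) coupling_law g0 K t z * C z.1 z.2.

Definition dWL_k {R : realType} {X Y : finType}
  (mX : X -> X -> R) (nuX : X -> R) (mY : Y -> Y -> R) (nuY : Y -> R)
  (C : X -> Y -> R) (delta : R) (k : nat) : R :=
  inf [set v : R | exists g0 K, markov_coupling mX nuX mY nuY g0 K /\
     v = \sum_(t < k) delta * (1 - delta) ^+ t * exp_cost g0 K C t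
         + (1 - delta) ^+ k * exp_cost g0 K C k].

(* d_WL^{delta,(infty)}: the expectation of the (nonnegative) series equals the
   series of expectations. *)
Definition dWL_inf {R : realType} {X Y : finType}
  (mX : X -> X -> R) (nuX : X -> R) (mY : Y -> Y -> R) (nuY : Y -> R)
  (C : X -> Y -> R) (delta : R) : R :=
  inf [set v : R | exists g0 K, markov_coupling mX nuX mY nuY g0 K /\
     v = lim ((fun n : nat => \sum_(t < n) delta * (1 - delta) ^+ t * exp_cost g0 K C t)
              @ \oo)].

Definition dOTC {R : realType} {X Y : finType}
  (mX : X -> X -> R) (nuX : X -> R) (mY : Y -> Y -> R) (nuY : Y -> R)
  (C : X -> Y -> R) : R :=
  inf [set v : R | exists (g : (X * Y)%type -> R) (K : (X * Y)%type -> (X * Y)%type -> R),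
     is_coupling nuX nuY g /\
     (forall x y, is_coupling (mX x) (mY y) (K (x, y))) /\
     is_stationary K g /\
     v = \sum_(z : (X * Y)%type) g z * C z.1 z.2].

(* Main.v *)
Require Import Defs.
From HB Require Import structures.
From mathcomp Require Import all_boot all_order all_algebra.
From mathcomp Require Import all_classical all_reals all_analysis.
From mathcomp Require Import ring lra.
Import Order.TTheory GRing.Theory Num.Theory.
Import numFieldNormedType.Exports.
Local Open Scope classical_set_scope.
Local Open Scope ring_scope.
Set Implicit Arguments. Unset Strict Implicit. Unset Printing Implicit Defensive.

Section Topo.
Variable R : realType.
Variable W : finType.

Definition PT := prod_topology (fun _ : W => R).

Lemma cont_coord w : continuous (fun r : PT => r w).
Proof. exact: (@proj_continuous W (fun _ => R) w). Qed.

Lemma cont_c (k : R) : continuous (fun _ : PT => k).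
Proof. exact: cst_continuous. Qed.

Lemma cont_B (f g : PT -> R) : continuous f -> continuous g -> continuous (fun r => f r - g r).
Proof. move=> hf hg r. have := cvgB (hf r) (hg r). exact. Qed.

Lemma cont_D (f g : PT -> R) : continuous f -> continuous g -> continuous (fun r => f r + g r).
Proof. move=> hf hg r. have := cvgD (hf r) (hg r). exact. Qed.

Lemma cont_M (f g : PT -> R) : continuous f -> continuous g -> continuous (fun r => f r * g r).
Proof. move=> hf hg r. have := cvgM (hf r) (hg r). exact. Qed.

Lemma cont_S (I : finType) (F : I -> PT -> R) :
  (forall i, continuous (F i)) -> continuous (fun r => \sum_(i : I) F i r).
Proof.
move=> hF.
suff : forall s : seq I, continuous (fun r => \sum_(i <- s) F i r) by apply.
elim=> [|i s IH].
  have -> : (fun r => \sum_(i <- [::]) F i r) = fun _ => 0.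
    by apply/funext => r; rewrite big_nil.
  exact: cont_c.
have -> : (fun r => \sum_(j <- i :: s) F j r) = fun r => F i r + \sum_(j <- s) F j r.
  by apply/funext => r; rewrite big_cons.
exact: cont_D.
Qed.

Lemma cont_N (f : PT -> R) : continuous f -> continuous (fun r => `|f r|).
Proof.
move=> hf r; apply: (@continuous_comp _ _ _ f (@Num.Def.normr _ R)); first exact: hf.
exact: norm_continuous.
Qed.

Lemma closed_f (f : PT -> R) c : continuous f -> closed [set r | f r <= c].
Proof. move=> hf; have := (continuous_closedP f).1 hf [set x | x <= c] (@closed_le R c). exact. Qed.

Lemma cluster_closed (u : nat -> PT) (p : PT) (A : set PT) :
  cluster (u n @[n --> \oo]) p -> closed A -> (\forall n \near \oo, A (u n)) -> A p.
Proof.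
move=> hp hA hev; apply: hA; move: hp; rewrite clusterE => hp.
exact: hp.
Qed.

Lemma le0_eps (a : R) : (forall eps, 0 < eps -> a <= eps) -> a <= 0.
Proof.
move=> h; rewrite leNgt; apply/negP => a0.
have := h (a / 2); rewrite divr_gt0 // => /(_ isT); lra.
Qed.

Lemma limit_small (f : PT -> R) (u : nat -> PT) p :
  cluster (u n @[n --> \oo]) p -> continuous f ->
  (forall n, `|f (u n)| <= n.+1%:R^-1) -> f p = 0.
Proof.
move=> hp hf hu; apply/eqP; rewrite -normr_le0; apply: le0_eps => eps e0.
apply: (cluster_closed (A := [set r | `|f r| <= eps]) hp); first exact/closed_f/cont_N.
near=> n; apply: le_trans (hu n) _; apply: ltW.
near: n; exact: (near_infty_natSinv_lt (PosNum e0)).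
Unshelve. all: by end_near.
Qed.

Lemma limit_le (f : PT -> R) (u : nat -> PT) p c :
  cluster (u n @[n --> \oo]) p -> continuous f ->
  (forall n, f (u n) <= c) -> f p <= c.
Proof.
move=> hp hf hu; apply: (cluster_closed (A := [set r | f r <= c]) hp); first exact/closed_f.
by apply: nearW => n; exact: hu.
Qed.

Lemma compact_seq (u : nat -> PT) : (forall n w, 0 <= u n w <= 1) ->
  exists p : PT, (forall w, 0 <= p w <= 1) /\ cluster (u n @[n --> \oo]) p.
Proof.
move=> hu.
have hc := @tychonoff W (fun _ => R) (fun _ => `[0, 1]%classic) (fun _ => @segment_compact R 0 1).
have Fp : ProperFilter (u n @[n --> \oo]) by apply: fmap_proper_filter.
have FK : (u n @[n --> \oo]) [set f : PT | forall w, `[(0:R), 1]%classic (f w)].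
  by exists 0%N => // n _ w /=; rewrite in_itv /=; exact: hu.
have [p [hp1 hp2]] := hc _ Fp FK.
exists p; split => // w; have := hp1 w; rewrite /= in_itv /=; exact.
Qed.

End Topo.

Section Main.
Variable R : realType.
Variables X Y : finType.
Variables (mX : X -> X -> R) (nuX : X -> R) (mY : Y -> Y -> R) (nuY : Y -> R).
Variable (C : X -> Y -> R).
Hypothesis HX : stationary_chain mX nuX.
Hypothesis HY : stationary_chain mY nuY.
Hypothesis HC : forall x y, 0 <= C x y.

Local Notation Z := (X * Y)%type.
Local Notation mc := (markov_coupling mX nuX mY nuY).

Lemma sumZ (f : Z -> R) : \sum_(z : Z) f z = \sum_x \sum_y f (x, y).
Proof. by rewrite pair_big /=; apply: eq_bigr => -[]. Qed.

Lemma coupling_sum1 (a : X -> R) (b : Y -> R) g :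
  is_coupling a b g -> is_prob a -> \sum_z g z = 1.
Proof.
move=> [_ [ha _]] [_ s]; rewrite sumZ -s; apply: eq_bigr => x _; exact: ha.
Qed.

Lemma sum_le1 (T : finType) (g : T -> R) z :
  (forall z, 0 <= g z) -> \sum_z g z = 1 -> g z <= 1.
Proof.
move=> g0 s; rewrite -s (bigD1 z) //= lerDl sumr_ge0 //.
Qed.

Lemma HKz (K : Z -> Z -> R) :
  (forall x y, is_coupling (mX x) (mY y) (K (x, y))) ->
  forall z, is_coupling (mX z.1) (mY z.2) (K z).
Proof. by move=> h [x y]; exact: h. Qed.

Lemma law_coupling g0 K t : mc g0 K -> is_coupling nuX nuY (coupling_law g0 K t).
Proof.
move=> [H0 HK]; elim: t => [|t [IHp [IHx IHy]]] //=.
have HK' := HKz (HK t).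
split; [move=> z; apply: sumr_ge0 => z' _; apply: mulr_ge0 => //; exact: (HK' z').1 |split].
- move=> x'.
  rewrite exchange_big /=.
  under eq_bigr do rewrite -mulr_sumr.
  rewrite sumZ.
  under eq_bigr do under eq_bigr do rewrite ((HK t _ _).2.1 x').
  under eq_bigr do rewrite -mulr_suml IHx.
  exact: HX.2.2 x'.
- move=> y'.
  rewrite exchange_big /=.
  under eq_bigr do rewrite -mulr_sumr.
  rewrite sumZ exchange_big /=.
  under eq_bigr do under eq_bigr do rewrite ((HK t _ _).2.2 y').
  under eq_bigr do rewrite -mulr_suml IHy.
  exact: HY.2.2 y'.
Qed.

Lemma law_ge0 g0 K t z : mc g0 K -> 0 <= coupling_law g0 K t z.
Proof. by move=> h; exact: (law_coupling t h).1. Qed.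

Lemma law_sum1 g0 K t : mc g0 K -> \sum_z coupling_law g0 K t z = 1.
Proof. by move=> h; apply: (coupling_sum1 (law_coupling t h)); exact: HX.2.1. Qed.

Lemma law_le1 g0 K t z : mc g0 K -> coupling_law g0 K t z <= 1.
Proof. by move=> h; apply: sum_le1; [move=> ?; exact: law_ge0|exact: law_sum1]. Qed.

Definition M := \sum_(z : Z) C z.1 z.2.

Lemma exp_cost_ge0 g0 K t : mc g0 K -> 0 <= exp_cost g0 K C t.
Proof. by move=> h; apply: sumr_ge0 => z _; apply: mulr_ge0 => //; exact: law_ge0. Qed.

Lemma exp_cost_leM g0 K t : mc g0 K -> exp_cost g0 K C t <= M.
Proof.
move=> h; apply: ler_sum => z _; apply: ler_piMl => //; exact: law_le1.
Qed.

Lemma M_ge0 : 0 <= M.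
Proof. by apply: sumr_ge0. Qed.

Definition Ps g0 K (d : R) (n : nat) :=
  \sum_(t < n) d * (1 - d) ^+ t * exp_cost g0 K C t.

Lemma geom (d : R) n : \sum_(t < n) d * (1 - d) ^+ t = 1 - (1 - d) ^+ n.
Proof.
elim: n => [|n IH]; first by rewrite big_ord0 expr0 subrr.
rewrite big_ord_recr /= IH exprSr; ring.
Qed.

Section Fixd.
Variable d : R.
Hypothesis d0 : 0 < d.
Hypothesis d1 : d <= 1.
Variables (g0 : Z -> R) (K : nat -> Z -> Z -> R).
Hypothesis hmc : mc g0 K.

Let Q n := Ps g0 K d n + M * (1 - d) ^+ n.

Lemma omd_ge0 : 0 <= 1 - d. Proof. by rewrite subr_ge0. Qed.

Lemma Ps_step n : Ps g0 K d n.+1 = Ps g0 K d n + d * (1 - d) ^+ n * exp_cost g0 K C n.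
Proof. by rewrite /Ps big_ord_recr. Qed.

Lemma Ps_nd : {homo Ps g0 K d : n m / (n <= m)%N >-> n <= m}.
Proof.
apply/nondecreasing_seqP => n; rewrite Ps_step lerDl.
apply: mulr_ge0; [apply: mulr_ge0; [exact: ltW|exact: exprn_ge0 omd_ge0]|exact: exp_cost_ge0].
Qed.

Lemma Q_ni : {homo Q : n m / (n <= m)%N >-> m <= n}.
Proof.
apply/nonincreasing_seqP => n; rewrite /Q Ps_step exprSr.
have h1 := exp_cost_leM n hmc.
have h2 : 0 <= d * (1 - d) ^+ n by apply: mulr_ge0; [exact: ltW|exact: exprn_ge0 omd_ge0].
have : d * (1 - d) ^+ n * exp_cost g0 K C n <= d * (1 - d) ^+ n * M by apply: ler_wpM2l.
move=> h3.
have -> : M * ((1 - d) ^+ n * (1 - d)) = M * (1 - d) ^+ n - d * (1 - d) ^+ n * M by ring.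
lra.
Qed.

Lemma Ps_le_Q n k : Ps g0 K d n <= Q k.
Proof.
have h1 := Ps_nd (leq_maxl n k).
have h2 := Q_ni (leq_maxr n k).
have h3 : Ps g0 K d (maxn n k) <= Q (maxn n k).
  by rewrite /Q lerDl; apply: mulr_ge0; [exact: M_ge0|exact: exprn_ge0 omd_ge0].
lra.
Qed.

Lemma Ps_ub : has_ubound (range (Ps g0 K d)).
Proof. by exists (Q 0) => _ [n _ <-]; exact: Ps_le_Q. Qed.

Lemma Ps_cvg : Ps g0 K d n @[n --> \oo] --> sup (range (Ps g0 K d)).
Proof. exact: nondecreasing_cvgn Ps_nd Ps_ub. Qed.

Lemma Ps_lim : lim (Ps g0 K d n @[n --> \oo]) = sup (range (Ps g0 K d)).
Proof. exact: cvg_lim Ps_cvg. Qed.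

Lemma Ps_le_lim n : Ps g0 K d n <= lim (Ps g0 K d n @[n --> \oo]).
Proof. by rewrite Ps_lim; apply: (ub_le_sup Ps_ub); exists n. Qed.

Lemma lim_le_Q k : lim (Ps g0 K d n @[n --> \oo]) <= Ps g0 K d k + M * (1 - d) ^+ k.
Proof.
rewrite Ps_lim; apply: ge_sup; first by exists (Ps g0 K d 0), 0%N.
by move=> _ [n _ <-]; exact: Ps_le_Q.
Qed.

Lemma lim_ge0 : 0 <= lim (Ps g0 K d n @[n --> \oo]).
Proof. apply: le_trans (Ps_le_lim 0); by rewrite /Ps big_ord0. Qed.

Lemma Vk_close k :
  `| (\sum_(t < k) d * (1 - d) ^+ t * exp_cost g0 K C t + (1 - d) ^+ k * exp_cost g0 K C k)
     - lim (Ps g0 K d n @[n --> \oo]) | <= (1 - d) ^+ k * M.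
Proof.
have a := Ps_le_lim k; have b := lim_le_Q k.
have e0 := exp_cost_ge0 k hmc; have e1 := exp_cost_leM k hmc.
have p0 : 0 <= (1 - d) ^+ k by exact: exprn_ge0 omd_ge0.
have c0 : 0 <= (1 - d) ^+ k * exp_cost g0 K C k by exact: mulr_ge0.
have c1 : (1 - d) ^+ k * exp_cost g0 K C k <= (1 - d) ^+ k * M by exact: ler_wpM2l.
rewrite -/(Ps g0 K d k) ler_norml; apply/andP; split; rewrite mulrC in b; lra.
Qed.

End Fixd.

Lemma omd_lt1 (d : R) : 0 < d -> d <= 1 -> `|1 - d| < 1.
Proof. by move=> d0 d1; rewrite ger0_norm ?subr_ge0 //; lra. Qed.

Lemma prod_coupling (a : X -> R) (b : Y -> R) :
  is_prob a -> is_prob b -> is_coupling a b (fun z => a z.1 * b z.2).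
Proof.
move=> [a0 a1] [b0 b1]; split; first by move=> z; exact: mulr_ge0.
split => [x|y] /=; first by rewrite -mulr_sumr b1 mulr1.
by rewrite -mulr_suml a1 mul1r.
Qed.

Definition gP (z : Z) := nuX z.1 * nuY z.2.
Definition KP (z z' : Z) := mX z.1 z'.1 * mY z.2 z'.2.

Lemma gP_coupling : is_coupling nuX nuY gP.
Proof. exact: prod_coupling HX.2.1 HY.2.1. Qed.

Lemma KP_coupling x y : is_coupling (mX x) (mY y) (KP (x, y)).
Proof. exact: (prod_coupling (HX.1 x) (HY.1 y)). Qed.

Lemma KP_stat : is_stationary KP gP.
Proof.
move=> [x' y']; rewrite sumZ /gP /KP /= -(HX.2.2 x') -(HY.2.2 y') big_distrl /=.
apply: eq_bigr => x _; rewrite big_distrr /=; apply: eq_bigr => y _ /=; ring.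
Qed.

Definition SOTC := [set v : R | exists (g : (X * Y)%type -> R) (K : (X * Y)%type -> (X * Y)%type -> R),
     is_coupling nuX nuY g /\
     (forall x y, is_coupling (mX x) (mY y) (K (x, y))) /\
     is_stationary K g /\
     v = \sum_(z : (X * Y)%type) g z * C z.1 z.2].

Lemma dOTCE : dOTC mX nuX mY nuY C = inf SOTC. Proof. by []. Qed.

Lemma SOTC_n0 : SOTC !=set0.
Proof.
exists (\sum_(z : Z) gP z * C z.1 z.2), gP, KP.
by split; [exact: gP_coupling|split; [exact: KP_coupling|split; [exact: KP_stat|]]].
Qed.

Lemma SOTC_lb : has_lbound SOTC.
Proof.
exists 0 => _ [g [K [hg [_ [_ ->]]]]]; apply: sumr_ge0 => z _; apply: mulr_ge0 => //.
exact: hg.1.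
Qed.

Definition SWL (d : R) := [set v : R | exists g0 K, mc g0 K /\
     v = lim ((fun n : nat => \sum_(t < n) d * (1 - d) ^+ t * exp_cost g0 K C t) @ \oo)].

Lemma dWL_infE d : dWL_inf mX nuX mY nuY C d = inf (SWL d). Proof. by []. Qed.

Lemma mcP : mc gP (fun _ => KP).
Proof. by split; [exact: gP_coupling|move=> _; exact: KP_coupling]. Qed.

Lemma SWL_n0 d : SWL d !=set0.
Proof. by eexists; exists gP, (fun _ => KP); split; [exact: mcP|]. Qed.

Lemma SWL_lb d : 0 < d -> d <= 1 -> has_lbound (SWL d).
Proof.
move=> d0 d1; exists 0 => _ [g0 [K [h ->]]]; exact: (lim_ge0 d0 d1 h).
Qed.

Lemma law_stat (g : Z -> R) (K : Z -> Z -> R) t : is_stationary K g -> coupling_law g (fun _ => K) t = g.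
Proof.
move=> hs; elim: t => [|t IH] //=; apply/funext => z'; rewrite IH; exact: hs.
Qed.

Lemma partA d : 0 < d -> d <= 1 -> dWL_inf mX nuX mY nuY C d <= dOTC mX nuX mY nuY C.
Proof.
move=> d0 d1; rewrite dWL_infE dOTCE; apply: lb_le_inf; first exact: SOTC_n0.
move=> _ [g [K [hg [hK [hs ->]]]]].
set v := \sum_(z : Z) g z * C z.1 z.2.
have hmc : mc g (fun _ => K) by split => // _.
have Pe : (fun n : nat => \sum_(t < n) d * (1 - d) ^+ t * exp_cost g (fun _ => K) C t)
   = fun n => v * (1 - (1 - d) ^+ n).
  apply/funext => n; rewrite -geom mulr_sumr; apply: eq_bigr => t _.
  by rewrite /exp_cost law_stat // mulrC.
have Hl : lim ((fun n : nat => \sum_(t < n) d * (1 - d) ^+ t * exp_cost g (fun _ => K) C t) @ \oo) = v.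
  rewrite Pe; apply: cvg_lim => //.
  have h := cvgM (cvg_cst v) (cvgB (cvg_cst (1 : R)) (cvg_expr (omd_lt1 d0 d1))).
  move: h; rewrite subr0 mulr1 => h; apply: h; typeclasses eauto.
rewrite -Hl; apply: ge_inf; first exact: SWL_lb.
by exists g, (fun _ => K); split.
Qed.

Lemma inf_close1 (A B : Type) (P : A -> B -> Prop) (f h : A -> B -> R) (e : R) :
  (exists a b, P a b) ->
  (forall a b, P a b -> 0 <= f a b) ->
  (forall a b, P a b -> f a b <= h a b + e) ->
  inf [set v | exists a b, P a b /\ v = f a b] <= inf [set v | exists a b, P a b /\ v = h a b] + e.
Proof.
move=> [a0 [b0 p0]] f0 fh.
rewrite -lerBlDr; apply: lb_le_inf; first by exists (h a0 b0), a0, b0.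
move=> _ [a [b [p ->]]]; rewrite lerBlDr.
apply: le_trans (fh a b p); apply: ge_inf; last by exists a, b.
by exists 0 => _ [a' [b' [p' ->]]]; exact: f0.
Qed.

Lemma inf_close (A B : Type) (P : A -> B -> Prop) (f h : A -> B -> R) (e : R) :
  (exists a b, P a b) ->
  (forall a b, P a b -> 0 <= f a b) -> (forall a b, P a b -> 0 <= h a b) ->
  (forall a b, P a b -> `|f a b - h a b| <= e) ->
  `| inf [set v | exists a b, P a b /\ v = f a b] - inf [set v | exists a b, P a b /\ v = h a b] | <= e.
Proof.
move=> ex f0 h0 fh.
have h1 : inf [set v | exists a b, P a b /\ v = f a b] <= inf [set v | exists a b, P a b /\ v = h a b] + e.
  apply: inf_close1 => // a b p.
  by have := fh a b p; rewrite ler_norml => /andP[]; lra.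
have h2 : inf [set v | exists a b, P a b /\ v = h a b] <= inf [set v | exists a b, P a b /\ v = f a b] + e.
  apply: inf_close1 => // a b p.
  by have := fh a b p; rewrite ler_norml => /andP[]; lra.
rewrite ler_norml; apply/andP; split; lra.
Qed.

Lemma dk_close d k : 0 < d -> d <= 1 ->
  `| dWL_k mX nuX mY nuY C d k - dWL_inf mX nuX mY nuY C d | <= (1 - d) ^+ k * M.
Proof.
move=> d0 d1; rewrite /dWL_k /dWL_inf.
apply: inf_close.
- by exists gP, (fun _ => KP); exact: mcP.
- move=> g0 K h; apply: addr_ge0; last first.
    by apply: mulr_ge0; [exact: exprn_ge0 (omd_ge0 d1)|exact: exp_cost_ge0].
  apply: sumr_ge0 => t _; apply: mulr_ge0; last exact: exp_cost_ge0.
  by apply: mulr_ge0; [exact: ltW|exact: exprn_ge0 (omd_ge0 d1)].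
- by move=> g0 K h; exact: (lim_ge0 d0 d1 h).
- by move=> g0 K h; exact: (Vk_close d0 d1 h).
Qed.

Lemma dk_cvg d : 0 < d -> d <= 1 ->
  dWL_k mX nuX mY nuY C d k @[k --> \oo] --> dWL_inf mX nuX mY nuY C d.
Proof.
move=> d0 d1.
have hc : (fun k : nat => (1 - d) ^+ k * M) @ \oo --> (0:R).
  rewrite -(mul0r M); exact: cvgM (cvg_expr (omd_lt1 d0 d1)) (cvg_cst M).
apply/(cvgrPdist_le _ _).2 => eps e0.
have hh := (cvgrPdist_le _ _).1 hc eps e0.
near=> k.
have hk : `|0 - (1 - d) ^+ k * M| <= eps by near: k; exact: hh.
rewrite sub0r normrN in hk.
rewrite distrC; apply: le_trans (dk_close k d0 d1) _.
apply: le_trans hk; exact: ler_norm.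
Unshelve. all: by end_near.
Qed.

Lemma dk_lim d : 0 < d -> d <= 1 ->
  limn (fun k => dWL_k mX nuX mY nuY C d k) = dWL_inf mX nuX mY nuY C d.
Proof. by move=> d0 d1; apply: cvg_lim => //; exact: dk_cvg. Qed.

Definition gz (rho : (Z * Z)%type -> R) (z : Z) := \sum_(z' : Z) rho (z, z').

Definition good (e c : R) (rho : (Z * Z)%type -> R) :=
  (forall w, 0 <= rho w <= 1) /\
  (forall x y x', \sum_(y' : Y) rho ((x, y), (x', y')) = mX x x' * gz rho (x, y)) /\
  (forall x y y', \sum_(x' : X) rho ((x, y), (x', y')) = mY y y' * gz rho (x, y)) /\
  (forall x, `|\sum_(y : Y) gz rho (x, y) - nuX x| <= e) /\
  (forall y, `|\sum_(x : X) gz rho (x, y) - nuY y| <= e) /\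
  (forall z', `|\sum_(z : Z) rho (z, z') - gz rho z'| <= e) /\
  (\sum_(z : Z) gz rho z * C z.1 z.2 <= c).

Lemma C3 c rho : good 0 c rho -> dOTC mX nuX mY nuY C <= c.
Proof.
case=> r01 [hx [hy [hnx [hny [hst hc]]]]].
have e0 (a b : R) : `|a - b| <= 0 -> a = b.
  by rewrite normr_le0 subr_eq0 => /eqP.
have g0 z : 0 <= gz rho z by apply: sumr_ge0 => z' _; case/andP: (r01 (z, z')).
pose K (z z' : Z) := if gz rho z == 0 then KP z z' else rho (z, z') / gz rho z.
have rhoK z z' : gz rho z * K z z' = rho (z, z').
  rewrite /K; case: eqP => [h|/eqP h]; last by rewrite mulrC divfK.
  rewrite h mul0r; apply/esym.
  have nn : forall i : Z, true -> 0 <= rho (z, i) by move=> i _; case/andP: (r01 (z, i)).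
  exact: (psumr_eq0P nn h).
have Kc : forall x y, is_coupling (mX x) (mY y) (K (x, y)).
  move=> x y; rewrite /K; case: eqP => [_|/eqP h]; first exact: KP_coupling.
  split; first by move=> z'; apply: divr_ge0; [case/andP: (r01 ((x,y),z'))|exact: g0].
  split => [x'|y'].
  - by rewrite -mulr_suml hx mulfK.
  - by rewrite -mulr_suml hy mulfK.
have gc : is_coupling nuX nuY (gz rho).
  split; first exact: g0.
  by split => [x|y]; [exact: e0 (hnx x)| exact: e0 (hny y)].
have st : is_stationary K (gz rho).
  by move=> z'; under eq_bigr do rewrite rhoK; exact: e0 (hst z').
apply: le_trans hc; apply: ge_inf; first exact: SOTC_lb.
exists (gz rho), K; split; [exact: gc|split; [exact: Kc|split; [exact: st|done]]].
Qed.

Lemma shift_id (d : R) (a : nat -> R) N :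
  (1 - d) * \sum_(t < N) d * (1 - d) ^+ t * a t.+1 =
  \sum_(t < N) d * (1 - d) ^+ t * a t - d * a 0%N + d * (1 - d) ^+ N * a N.
Proof.
elim: N => [|N IH]; first by rewrite !big_ord0 expr0; ring.
rewrite !big_ord_recr /= mulrDr IH exprSr; ring.
Qed.

Lemma C1 (e c d : R) : 0 < d -> d <= 1 -> 2 * d <= e ->
  dWL_inf mX nuX mY nuY C d < c -> exists rho, good e c rho.
Proof.
move=> d0 d1 de hlt.
have e0 : 0 < e by lra.
rewrite dWL_infE in hlt.
have [_ [g0 [K [hmc ->]]] hv] := inf_lt (SWL_n0 d) hlt.
have [N _ hN] := (cvgrPdist_le _ _).1 (cvg_expr (omd_lt1 d0 d1)) e e0.
have q0 : 0 <= (1 - d) ^+ N by exact: exprn_ge0 (omd_ge0 d1).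
have hNe : (1 - d) ^+ N <= e.
  by have := hN N (leqnn N); rewrite /= sub0r normrN ger0_norm.
have hw0 t : 0 <= d * (1 - d) ^+ t.
  by apply: mulr_ge0; [exact: ltW|exact: exprn_ge0 (omd_ge0 d1)].
have hK1 t z : \sum_(z' : Z) K t z z' = 1.
  exact: coupling_sum1 (HKz (hmc.2 t) z) (HX.1 z.1).
have hK0 t z z' : 0 <= K t z z' by exact: (HKz (hmc.2 t) z).1.
have hKl t z z' : K t z z' <= 1 by apply: sum_le1 => //; exact: hK0.
have hL0 t z : 0 <= coupling_law g0 K t z by exact: law_ge0.
have hLl t z : coupling_law g0 K t z <= 1 by exact: law_le1.
have hsw : \sum_(t < N) d * (1 - d) ^+ t = 1 - (1 - d) ^+ N by exact: geom.
pose rho (p : (Z * Z)%type) :=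
  \sum_(t < N) d * (1 - d) ^+ t * coupling_law g0 K t p.1 * K t p.1 p.2.
have hgz z : gz rho z = \sum_(t < N) d * (1 - d) ^+ t * coupling_law g0 K t z.
  rewrite /gz /rho /= exchange_big /=; apply: eq_bigr => t _.
  by rewrite -mulr_sumr hK1 mulr1.
exists rho; split.
  move=> p; apply/andP; split.
    by apply: sumr_ge0 => t _; apply: mulr_ge0; [apply: mulr_ge0|].
  apply: (@le_trans _ _ (\sum_(t < N) d * (1 - d) ^+ t)); last by rewrite hsw; lra.
  apply: ler_sum => t _.
  apply: (@le_trans _ _ (d * (1 - d) ^+ t * coupling_law g0 K t p.1)).
    by apply: ler_piMr => //; apply: mulr_ge0.
  exact: ler_piMr.
split.
  move=> x y x'; rewrite hgz mulr_sumr /rho /= exchange_big /=; apply: eq_bigr => t _.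
  by rewrite -mulr_sumr ((hmc.2 t x y).2.1 x'); ring.
split.
  move=> x y y'; rewrite hgz mulr_sumr /rho /= exchange_big /=; apply: eq_bigr => t _.
  by rewrite -mulr_sumr ((hmc.2 t x y).2.2 y'); ring.
split.
  move=> x.
  have -> : \sum_(y : Y) gz rho (x, y) = (1 - (1 - d) ^+ N) * nuX x.
    rewrite -hsw mulr_suml.
    under eq_bigr do rewrite hgz.
    rewrite exchange_big /=; apply: eq_bigr => t _.
    by rewrite -mulr_sumr ((law_coupling t hmc).2.1 x).
  have n0 := (HX.2.1).1 x.
  have n1 : nuX x <= 1 by apply: sum_le1; [exact: (HX.2.1).1|exact: (HX.2.1).2].
  have : (1 - d) ^+ N * nuX x <= (1 - d) ^+ N by exact: ler_piMr.
  have : 0 <= (1 - d) ^+ N * nuX x by exact: mulr_ge0.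
  rewrite ler_norml; move=> h1 h2; apply/andP; split; nra.
split.
  move=> y.
  have -> : \sum_(x : X) gz rho (x, y) = (1 - (1 - d) ^+ N) * nuY y.
    rewrite -hsw mulr_suml.
    under eq_bigr do rewrite hgz.
    rewrite exchange_big /=; apply: eq_bigr => t _.
    by rewrite -mulr_sumr ((law_coupling t hmc).2.2 y).
  have n0 := (HY.2.1).1 y.
  have n1 : nuY y <= 1 by apply: sum_le1; [exact: (HY.2.1).1|exact: (HY.2.1).2].
  have : (1 - d) ^+ N * nuY y <= (1 - d) ^+ N by exact: ler_piMr.
  have : 0 <= (1 - d) ^+ N * nuY y by exact: mulr_ge0.
  rewrite ler_norml; move=> h1 h2; apply/andP; split; nra.
split.
  move=> z'.
  have -> : \sum_(z : Z) rho (z, z') =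
      \sum_(t < N) d * (1 - d) ^+ t * coupling_law g0 K t.+1 z'.
    rewrite /rho /= exchange_big /=; apply: eq_bigr => t _.
    by rewrite /= mulr_sumr; apply: eq_bigr => z _; ring.
  rewrite hgz.
  set a := fun t => coupling_law g0 K t z'.
  have hs := shift_id d a N.
  set A := \sum_(t < N) d * (1 - d) ^+ t * a t.+1 in hs.
  set B := \sum_(t < N) d * (1 - d) ^+ t * a t in hs.
  have -> : \sum_(t < N) d * (1 - d) ^+ t * coupling_law g0 K t.+1 z' = A by [].
  have -> : \sum_(t < N) d * (1 - d) ^+ t * coupling_law g0 K t z' = B by [].
  have A0 : 0 <= A by apply: sumr_ge0 => t _; apply: mulr_ge0 => //; exact: hL0.
  have A1 : A <= 1.
    apply: (@le_trans _ _ (\sum_(t < N) d * (1 - d) ^+ t)); last by rewrite hsw; lra.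
    by apply: ler_sum => t _; apply: ler_piMr => //; exact: hLl.
  have a00 := hL0 0%N z'; have a01 := hLl 0%N z'.
  have aN0 := hL0 N z'; have aN1 := hLl N z'.
  have q1 : (1 - d) ^+ N <= 1 by apply: exprn_ile1 => //; lra.
  have p1 : 0 <= d * A <= d by apply/andP; split; [apply: mulr_ge0; lra|apply: ler_piMr; lra].
  have p2 : 0 <= d * a 0%N <= d by apply/andP; split; [apply: mulr_ge0; [lra|exact: a00]|apply: ler_piMr; [lra|exact: a01]].
  have p3 : 0 <= d * (1 - d) ^+ N * a N <= d.
    apply/andP; split; first by apply: mulr_ge0; [apply: mulr_ge0; lra|exact: aN0].
    apply: (@le_trans _ _ (d * (1 - d) ^+ N)); first by apply: ler_piMr; [apply: mulr_ge0; lra|exact: aN1].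
    by apply: ler_piMr; lra.
  move: p1 p2 p3 => /andP[p1 p1'] /andP[p2 p2'] /andP[p3 p3'].
  rewrite ler_norml; apply/andP; split; nra.
under eq_bigr do rewrite hgz mulr_suml.
rewrite exchange_big /=.
apply: (@le_trans _ _ (Ps g0 K d N)); last first.
  by apply: ltW; apply: le_lt_trans hv; exact: (Ps_le_lim d0 d1 hmc N).
rewrite /Ps /exp_cost le_eqVlt; apply/orP; left; apply/eqP; apply: eq_bigr => t _.
by rewrite mulr_sumr; apply: eq_bigr => z _; ring.
Qed.

Ltac contt := repeat first [ apply: cont_B | apply: cont_M | apply: cont_S => ?
                          | apply: cont_coord | apply: cont_c ].

Lemma C2 c (u : nat -> PT R (Z * Z)%type) :
  (forall n, good (n.+1%:R^-1) c (u n)) -> exists rho, good 0 c rho.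
Proof.
move=> hu.
have [p [p01 hp]] := compact_seq (fun n => (hu n).1).
have hz (f : PT R (Z * Z)%type -> R) :
    continuous f -> (forall n, `|f (u n)| <= n.+1%:R^-1) -> f p = 0.
  by move=> hf hb; exact: limit_small hp hf hb.
have inv0 n : 0 <= n.+1%:R^-1 :> R by rewrite invr_ge0.
exists p; split => //.
split.
  move=> x y x'; apply/eqP; rewrite -subr_eq0; apply/eqP; rewrite /gz.
  apply: (hz (fun r => \sum_(y' : Y) r ((x, y), (x', y')) - mX x x' * \sum_(z' : Z) r ((x, y), z'))).
    by contt.
  by move=> n; have := (hu n).2.1 x y x'; rewrite /gz => ->; rewrite subrr normr0.
split.
  move=> x y y'; apply/eqP; rewrite -subr_eq0; apply/eqP; rewrite /gz.
  apply: (hz (fun r => \sum_(x' : X) r ((x, y), (x', y')) - mY y y' * \sum_(z' : Z) r ((x, y), z'))).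
    by contt.
  by move=> n; have := (hu n).2.2.1 x y y'; rewrite /gz => ->; rewrite subrr normr0.
split.
  move=> x; rewrite /gz.
  rewrite (hz (fun r => \sum_(y : Y) \sum_(z' : Z) r ((x, y), z') - nuX x)) ?normr0 //.
    by contt.
  by move=> n; exact: (hu n).2.2.2.1 x.
split.
  move=> y; rewrite /gz.
  rewrite (hz (fun r => \sum_(x : X) \sum_(z' : Z) r ((x, y), z') - nuY y)) ?normr0 //.
    by contt.
  by move=> n; exact: (hu n).2.2.2.2.1 y.
split.
  move=> z'; rewrite /gz.
  rewrite (hz (fun r => \sum_(z : Z) r (z, z') - \sum_(z'' : Z) r (z', z''))) ?normr0 //.
    by contt.
  by move=> n; exact: (hu n).2.2.2.2.2.1 z'.
rewrite /gz.
apply: (limit_le (f := fun r => \sum_(z : Z) (\sum_(z' : Z) r (z, z')) * C z.1 z.2) hp).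
  by contt.
by move=> n; exact: (hu n).2.2.2.2.2.2.
Qed.

Lemma partC eta : 0 < eta ->
  exists2 e : R, 0 < e & forall d, 0 < d -> d < e ->
    dOTC mX nuX mY nuY C - eta <= dWL_inf mX nuX mY nuY C d.
Proof.
move=> eta0.
case: (pselect (exists2 e : R, 0 < e & forall d, 0 < d -> d < e ->
    dOTC mX nuX mY nuY C - eta <= dWL_inf mX nuX mY nuY C d)) => // H.
exfalso.
have H1 : forall n : nat, exists rho : PT R (Z * Z)%type,
    good (n.+1%:R^-1) (dOTC mX nuX mY nuY C - eta) rho.
  move=> n.
  have e0 : 0 < n.+1%:R^-1 :> R by rewrite invr_gt0.
  have e1 : n.+1%:R^-1 <= 1 :> R by rewrite invf_le1 // ler1n.
  have : ~ (forall d, 0 < d -> d < n.+1%:R^-1 / 2 ->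
      dOTC mX nuX mY nuY C - eta <= dWL_inf mX nuX mY nuY C d).
    by move=> h; apply: H; exists (n.+1%:R^-1 / 2) => //; rewrite divr_gt0.
  move=> /existsNP [d /not_implyP [d0 /not_implyP [de /negP]]].
  rewrite -ltNge => hlt.
  apply: (C1 d0 _ _ hlt); move: (n.+1%:R^-1 : R) e0 e1 de => e e0' e1' de'; lra.
have [u hu] := choice H1.
have [rho hr] := C2 hu.
have := C3 hr; lra.
Qed.

Lemma part1 : (fun d => dWL_inf mX nuX mY nuY C d) @ (0:R)^'+ --> dOTC mX nuX mY nuY C.
Proof.
apply/(cvgrPdist_le _ _).2 => eps e0.
have [e epos he] := partC e0.
near=> d.
have d0 : 0 < d by near: d; exact: nbhs_right_gt.
have d1 : d < 1 by near: d; exact: nbhs_right_lt ltr01.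
have de : d < e by near: d; exact: nbhs_right_lt epos.
have h1 := partA d0 (ltW d1).
have h2 := he d d0 de.
rewrite ger0_norm ?subr_ge0 //; lra.
Unshelve. all: by end_near.
Qed.

Lemma main_all :
  ((fun delta : R => dWL_inf mX nuX mY nuY C delta) @ (0 : R)^'+ --> dOTC mX nuX mY nuY C) /\
  ((forall delta : R, 0 < delta <= 1 -> cvgn (fun k : nat => dWL_k mX nuX mY nuY C delta k)) /\
   ((fun delta : R => limn (fun k : nat => dWL_k mX nuX mY nuY C delta k)) @ (0 : R)^'+
      --> dOTC mX nuX mY nuY C)).
Proof.
split; first exact: part1.
split.
  by move=> d /andP[d0 d1]; apply: cvgP; exact: dk_cvg.
apply: cvg_trans part1.
apply: near_eq_cvg; near=> d.
have d0 : 0 < d by near: d; exact: nbhs_right_gt.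
have d1 : d < 1 by near: d; exact: nbhs_right_lt ltr01.
by rewrite dk_lim // ltW.
Unshelve. all: by end_near.
Qed.

End Main.

Theorem theorem16 (R : realType) (X Y : finType)
  (mX : X -> X -> R) (nuX : X -> R) (mY : Y -> Y -> R) (nuY : Y -> R)
  (C : X -> Y -> R) :
  stationary_chain mX nuX -> stationary_chain mY nuY ->
  (forall x y, 0 <= C x y) ->
  ((fun delta : R => dWL_inf mX nuX mY nuY C delta) @ (0 : R)^'+ --> dOTC mX nuX mY nuY C) /\
  ((forall delta : R, 0 < delta <= 1 -> cvgn (fun k : nat => dWL_k mX nuX mY nuY C delta k)) /\
   ((fun delta : R => limn (fun k : nat => dWL_k mX nuX mY nuY C delta k)) @ (0 : R)^'+
      --> dOTC mX nuX mY nuY C)).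
Proof.
move=> HX HY HC; exact: (main_all HX HY HC).
Qed.
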